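(* Let $n\geqslant 2$, let $m_1,\ldots,m_n$ be nonnegative integers, and let $A=(a_{ij})_{1\leqslant i,j\leqslant n}$ be a complex matrix. Let $P(x_1,\ldots,x_n)\in\mathbb{C}[x_1,\ldots,x_n]$ be homogeneous and suppose there is $\nu\in\{1,-1\}$ such that for all $1\leqslant i<j\leqslant n$, $$P(x_1,\ldots,x_{i-1},x_j,x_{i+1},\ldots,x_{j-1},x_i,x_{j+1},\ldots,x_n)=\nu P(x_1,\ldots,x_n).$$ Set $f(x_1,\ldots,x_n)=\|a_{ij}x_j^{m_i}\|_{1\leqslant i,j\leqslant n}\,P(x_1,\ldots,x_n)$. Then, as polynomials in $x$, $$f^*(x,\ldots,x)=P^*(x-m_1,\ldots,x-m_n)\prod_{i=1}^n (x)_{m_i}\times\begin{cases}\|A\| & \text{if } \nu=1,\\ \mathrm{per}(A) & \text{if } \nu=-1.\end{cases}$$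
   Context: $(x)_0=1$ and $(x)_r=x(x-1)\cdots(x-r+1)$ for positive integers $r$. For a polynomial $Q=\sum_{j_1,\ldots,j_n} c_{j_1,\ldots,j_n}x_1^{j_1}\cdots x_n^{j_n}\in\mathbb{C}[x_1,\ldots,x_n]$, $Q^*$ denotes the polynomial $\sum_{j_1,\ldots,j_n} c_{j_1,\ldots,j_n}(x_1)_{j_1}\cdots(x_n)_{j_n}$. For a matrix $B=(b_{ij})_{1\leqslant i,j\leqslant n}$, $\|B\|=\sum_{\sigma\in S_n}\varepsilon(\sigma)\prod_{i=1}^n b_{i,\sigma(i)}$ is its determinant and $\mathrm{per}(B)=\sum_{\sigma\in S_n}\prod_{i=1}^n b_{i,\sigma(i)}$ its permanent, where $S_n$ is the symmetric group on $\{1,\ldots,n\}$ and $\varepsilon(\sigma)$ is the sign of $\sigma$. *)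

(* Defs.v *)
From mathcomp Require Import all_boot all_algebra fingroup perm.
From mathcomp Require Import Rstruct.
From mathcomp Require Import complex.
From mathcomp Require Export mpoly.
Set Implicit Arguments. Unset Strict Implicit. Unset Printing Implicit Defensive.
Import GRing.Theory.
Local Open Scope ring_scope.

Definition C : numClosedFieldType := (Rdefinitions.R)[i].

Definition ffactr {R : ringType} (y : R) (r : nat) : R :=
  \prod_(k < r) (y - k%:R).

Definition mfstar {n : nat} {R : comRingType} (Q : {mpoly R[n]}) : {mpoly R[n]} :=
  \sum_(m <- msupp Q) Q@_m *: \prod_(i < n) ffactr ('X_i) (m i).

(* Evaluation of a multivariate polynomial at univariate polynomials
   (used to form Q(y_1,...,y_n) with y_i in C[x]). *)
Definition mevalp {n : nat} {R : comRingType} (Q : {mpoly R[n]})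
  (y : 'I_n -> {poly R}) : {poly R} := mmap (@polyC R) y Q.

Definition per {R : comRingType} {n : nat} (B : 'M[R]_n) : R :=
  \sum_(s : 'S_n) \prod_(i < n) B i (s i).

(* Main.v *)
Require Import Defs.
From mathcomp Require Import all_boot all_algebra fingroup perm.
From mathcomp Require Import mpoly.
From mathcomp Require Import bigenough ssrcomplements.
Import GRing.Theory.
Local Open Scope ring_scope.

Module Helpers.
Import BigEnough Num.Theory.
Section S.
Variable n : nat.
Implicit Types (p q : {mpoly C[n]}).

Definition Fm (m : 'X_{1..n}) : {mpoly C[n]} := \prod_(i < n) ffactr ('X_i) (m i).

Lemma mfstarE k p : (msize p <= k)%N ->
  mfstar p = \sum_(m : 'X_{1..n < k}) p@_m *: Fm m.
Proof.
move=> le_pi; set I : subFinType _ := 'X_{1..n < k}.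
rewrite /mfstar (big_mksub I) ?msupp_uniq //=; first last.
  by move=> x /msize_mdeg_lt /leq_trans; apply.
by rewrite big_rmcond //= => j /memN_msupp_eq0 ->; rewrite scale0r.
Qed.

Lemma mfstarD p q : mfstar (p + q) = mfstar p + mfstar q.
Proof.
pose_big_enough i.
  rewrite !(mfstarE i) // -big_split /=; apply/eq_bigr => m _.
  by rewrite mcoeffD scalerDl.
by close.
Qed.

Lemma mfstarZ c p : mfstar (c *: p) = c *: mfstar p.
Proof.
pose_big_enough i.
  rewrite !(mfstarE i) // scaler_sumr; apply/eq_bigr => m _.
  by rewrite mcoeffZ scalerA.
by close.
Qed.

Lemma mfstar0 : mfstar (0 : {mpoly C[n]}) = 0.
Proof. by rewrite /mfstar msupp0 big_nil. Qed.

Lemma mfstarX m : mfstar ('X_[m] : {mpoly C[n]}) = Fm m.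
Proof. by rewrite /mfstar msuppX big_seq1 mcoeffX eqxx scale1r. Qed.

Lemma mevalpD p q y : mevalp (p + q) y = mevalp p y + mevalp q y.
Proof. exact: mmapD. Qed.

Lemma mevalpZ c p y : mevalp (c *: p) y = c%:P * mevalp p y.
Proof. exact: mmapZ. Qed.

Lemma mevalp0 y : mevalp (0 : {mpoly C[n]}) y = 0.
Proof. exact: mmap0. Qed.

Lemma mevalpM p q y : mevalp (p * q) y = mevalp p y * mevalp q y.
Proof. exact: rmorphM. Qed.

Lemma mmap_ffactr (S : comRingType) (f : {rmorphism C -> S}) h i k :
  mmap f h (ffactr ('X_i : {mpoly C[n]}) k) = ffactr (h i) k.
Proof.
rewrite /ffactr rmorph_prod; apply: eq_bigr => j _.
by rewrite rmorphB /= rmorph_nat mmapX mmap1U.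
Qed.

Lemma mmapF (S : comRingType) (f : {rmorphism C -> S}) h m :
  mmap f h (Fm m) = \prod_(i < n) ffactr (h i) (m i).
Proof. by rewrite /Fm rmorph_prod; apply: eq_bigr => i _; apply: mmap_ffactr. Qed.


Lemma ffactrD (R : comRingType) (y : R) a b :
  ffactr y (a + b) = ffactr y a * ffactr (y - a%:R) b.
Proof.
rewrite /ffactr big_split_ord /=; congr (_ * _); apply: eq_bigr => k _.
by rewrite natrD opprD addrA.
Qed.

Lemma keyX (b : 'X_{1..n}) Q :
  mevalp (mfstar ('X_[b] * Q)) (fun _ => 'X) =
  (\prod_(i < n) ffactr ('X : {poly C}) (b i)) *
  mevalp (mfstar Q) (fun i => 'X - ((b i)%:R)%:P).
Proof.
elim/mpolyind: Q => [|c m q _ _ IH].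
  by rewrite mulr0 !mfstar0 !mevalp0 mulr0.
rewrite mulrDr !mfstarD !mevalpD IH mulrDr; congr (_ + _).
rewrite -scalerAr -mpolyXD !mfstarZ !mevalpZ !mfstarX /mevalp !mmapF.
rewrite [RHS]mulrCA; congr (_ * _).
rewrite -big_split /=; apply: eq_bigr => i _.
by rewrite mnmDE ffactrD polyC_natr.
Qed.

Lemma symX (s : 'S_n) Q (y : 'I_n -> {poly C}) :
  mevalp (mfstar (msym s Q)) y = mevalp (mfstar Q) (fun i => y (s i)).
Proof.
elim/mpolyind: Q => [|c m q _ _ IH].
  by rewrite msym0 !mfstar0 !mevalp0.
rewrite msymD !mfstarD !mevalpD; congr (_ + _); last exact: IH.
rewrite msymZ msymX !mfstarZ !mevalpZ !mfstarX /mevalp !mmapF; congr (_ * _).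
rewrite (reindex_inj (@perm_inj _ s)) /=; apply: eq_bigr => i _.
by rewrite mnmE permK.
Qed.

Lemma mevalp_ext (Q : {mpoly C[n]}) (y1 y2 : 'I_n -> {poly C}) :
  y1 =1 y2 -> mevalp Q y1 = mevalp Q y2.
Proof.
move=> e; rewrite /mevalp /mmap; apply: eq_bigr => k _.
by rewrite (mmap1_eq _ e).
Qed.

Lemma mevalp_mfstar_sum (I : Type) (r : seq I) (Pr : pred I) (F : I -> {mpoly C[n]}) y :
  mevalp (mfstar (\sum_(i <- r | Pr i) F i)) y =
  \sum_(i <- r | Pr i) mevalp (mfstar (F i)) y.
Proof.
elim/big_rec2: _ => [|i a b _ <-]; first by rewrite mfstar0 mevalp0.
by rewrite mfstarD mevalpD.
Qed.

Lemma sym_sign (P : {mpoly C[n]}) (nu : C) : (nu = 1 \/ nu = -1) ->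
  (forall i j : 'I_n, (i < j)%N -> msym (tperm i j) P = nu *: P) ->
  forall s : 'S_n, msym s P = (nu ^+ s) *: P.
Proof.
move=> Hnu Hs s; have [ts -> Hd] := prod_tpermP s.
elim: ts Hd => [|[x1 x2] ts IH] /=.
  by rewrite big_nil odd_perm1 expr0 scale1r msym1m.
case/andP => dx Hd; rewrite big_cons msymMm /=.
have -> : msym (tperm x1 x2) P = nu *: P.
  case: (ltngtP x1 x2) => [lt|lt|/val_inj eq]; first exact: Hs.
    by rewrite tpermC; apply: Hs.
  by rewrite eq eqxx in dx.
rewrite msymZ IH // scalerA odd_permM odd_tperm dx /=.
case: (odd_perm _) => /=; last by rewrite expr0 expr1 ?mulr1.
by rewrite expr0 expr1; case: Hnu => ->; rewrite ?mulr1 ?mulrNN ?mulr1.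
Qed.

End S.

End Helpers.
Import Helpers.
Import Num.Theory.

Theorem theorem2p1 (n : nat) (hn : (2 <= n)%N) (m : 'I_n -> nat)
  (A : 'M[C]_n) (P : {mpoly C[n]}) (nu : C) :
  (exists d : nat, P \is d.-homog) ->
  (nu = 1 \/ nu = -1) ->
  (forall i j : 'I_n, (i < j)%N -> msym (tperm i j) P = nu *: P) ->
  let f : {mpoly C[n]} :=
    \det (\matrix_(i < n, j < n) ((A i j)%:MP * 'X_j ^+ m i)) * P in
  mevalp (mfstar f) (fun _ => 'X) =
    mevalp (mfstar P) (fun i => 'X - ((m i)%:R)%:P)
    * (\prod_(i < n) ffactr ('X : {poly C}) (m i))
    * (if nu == 1 then \det A else per A)%:P.
Proof.
move=> _ Hnu Hsym f.
have Hs := @sym_sign n P nu Hnu Hsym.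
set y := fun i => 'X - ((m i)%:R)%:P.
set G := mevalp (mfstar P) y.
set Pi := \prod_(i < n) ffactr ('X : {poly C}) (m i).
have HG (s : 'S_n) : mevalp (mfstar P) (fun j => y (s j)) = (nu ^+ s)%:P * G.
  by rewrite -symX Hs mfstarZ mevalpZ.
have Hterm (s : 'S_n) : mevalp (mfstar ((-1) ^+ s * \prod_i
     (\matrix_(i < n, j < n) ((A i j)%:MP * 'X_j ^+ m i)) i (s i) * P)) (fun _ => 'X)
   = (((-1) ^+ s * \prod_i A i (s i)) * nu ^+ s)%:P * (G * Pi).
  set b := [multinom m ((s^-1)%g j) | j < n].
  have -> : (-1) ^+ s * \prod_i
     (\matrix_(i < n, j < n) ((A i j)%:MP * 'X_j ^+ m i)) i (s i) * P
     = ((-1) ^+ s * \prod_i A i (s i)) *: ('X_[b] * P).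
    rewrite (eq_bigr (fun i => (A i (s i))%:MP * 'X_(s i) ^+ m i)); last first.
      by move=> i _; rewrite mxE.
    rewrite big_split /= -rmorph_prod (@mpolyXE _ _ s b).
    have -> : \prod_i 'X_(s i) ^+ b (s i) = \prod_i ('X_(s i) : {mpoly C[n]}) ^+ m i.
      by apply: eq_bigr => i _; rewrite mnmE permK.
    by rewrite -mul_mpolyC rmorphM /= rmorphXn rmorphN1 !mulrA.
  rewrite mfstarZ mevalpZ keyX.
  rewrite (@mevalp_ext _ _ _ (fun j => y ((s^-1)%g j))); last first.
    by move=> j; rewrite /y mnmE.
  rewrite HG odd_permV.
  have -> : \prod_(i < n) ffactr ('X : {poly C}) (b i) = Pi.
    rewrite /Pi (reindex_inj (@perm_inj _ s)) /=; apply: eq_bigr => i _.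
    by rewrite mnmE permK.
  rewrite !rmorphM /=; rewrite /G /Pi; 
  rewrite -!mulrA; congr (_ * (_ * _)); rewrite mulrCA; congr (_ * _); exact: mulrC.
rewrite /f /determinant mulr_suml mevalp_mfstar_sum (eq_bigr _ (fun s _ => Hterm s)).
rewrite -mulr_suml -rmorph_sum mulrC; congr (_ * _%:P).
case: Hnu => ->.
  by rewrite eqxx; apply: eq_bigr => s _; rewrite expr1n mulr1.
have -> : (-1 == 1 :> C) = false.
  by apply/negbTE; rewrite eq_sym -addr_eq0 (pnatr_eq0 C 2).
rewrite /per; apply: eq_bigr => s _.
by rewrite mulrAC -signr_addb addbb expr0 mul1r.
Qed.
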